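(* Let $(G,c)$ be an edge-colored DAG, $G=(V,E)$, and suppose $ij\in E$ is covered, i.e. $\mathrm{pa}_G(j)=\mathrm{pa}_G(i)\cup\{i\}$. Let $G_{i\leftarrow j}$ be the DAG obtained by reversing $ij$ to $ji$, and color it by $c_{i\leftarrow j}(kl)=c(kl)$ for $kl\neq ji$ and $c_{i\leftarrow j}(ji)=c(ij)$ (vertices keeping distinct colors). If there is an edge $kl$ with $c(kl)=c(ij)$ and $l\notin\{i,j\}$, then $\mathcal M(G_{i\leftarrow j},c_{i\leftarrow j})\neq\mathcal M(G,c)$.
   Context: An edge-colored DAG $(G,c)$ has a map $c$ on $V\sqcup E$ in which every vertex forms its own color class. $\mathcal M(G,c)$ is the set of $(I-\Lambda)^{-T}\Omega(I-\Lambda)^{-1}$ with $\Omega=\mathrm{diag}(\omega_i)$, $\omega_i>0$, $\lambda_{ij}=0$ for $ij\notin E$, and $\lambda_{ij}=\lambda_{kl}$ whenever $c(ij)=c(kl)$. *)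

(* Defs.v *)
From HB Require Import structures.
From mathcomp Require Import all_boot all_order all_algebra.
From mathcomp Require Import Rstruct.
From Stdlib Require Import Reals.
Set Implicit Arguments. Unset Strict Implicit. Unset Printing Implicit Defensive.
Import Order.TTheory GRing.Theory Num.Theory.
Local Open Scope ring_scope.

(* A directed graph on vertex set 'I_n is an edge relation E : rel 'I_n
   (E k l means the edge k -> l, written kl in the paper). *)

Definition is_dag n (E : rel 'I_n) : Prop :=
  forall k l, E k l -> ~~ connect E l k.

Definition covered n (E : rel 'I_n) (i j : 'I_n) : Prop :=
  E i j /\ forall k, E k j = (E k i || (k == i)).

(* Edge colouring: c k l is the colour of edge kl (only values on edges
   matter).  Vertices form singleton colour classes, so they impose no
   constraint and are not represented. *)

Definition model n (E : rel 'I_n) (c : 'I_n -> 'I_n -> nat) : 'M[R]_n -> Prop :=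
  fun S => exists (L : 'M[R]_n) (w : 'I_n -> R),
    (forall k, 0 < w k) /\
    (forall k l, ~~ E k l -> L k l = 0) /\
    (forall k l k' l', E k l -> E k' l' -> c k l = c k' l' -> L k l = L k' l') /\
    S = (invmx (1%:M - L))^T *m diag_mx (\row_k w k) *m invmx (1%:M - L).

Definition rev_edge n (E : rel 'I_n) (i j : 'I_n) : rel 'I_n :=
  fun k l => if (k == j) && (l == i) then true
             else if (k == i) && (l == j) then false
             else E k l.

Definition rev_col n (c : 'I_n -> 'I_n -> nat) (i j : 'I_n) :
    'I_n -> 'I_n -> nat :=
  fun k l => if (k == j) && (l == i) then c i j else c k l.

(* Main.v *)
Require Import Defs.
From Stdlib Require Import Reals.
From HB Require Import structures.
From mathcomp Require Import all_boot all_order all_algebra.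
From mathcomp Require Import Rstruct.
From mathcomp Require Import zify ring lra.

Set Implicit Arguments. Unset Strict Implicit. Unset Printing Implicit Defensive.
Import Order.TTheory GRing.Theory Num.Theory.
Local Open Scope ring_scope.

Lemma pow_support n (L : 'M[R]_n.+1) (E : rel 'I_n.+1) (f : 'I_n.+1 -> nat) :
  (forall p q, ~~ E p q -> L p q = 0) -> (forall p q, E p q -> (f p < f q)%N) ->
  forall m k l, (L ^+ m) k l != 0 -> (f k + m <= f l)%N.
Proof.
move=> HL Hf; elim=> [|m IH] k l.
  rewrite expr0 -idmxE mxE; have [->|] := eqVneq k l; first by rewrite addn0.
  by rewrite eqxx.
rewrite exprSr -mulmxE mxE => Hs.
have [q Hq]: exists q, (L ^+ m) k q * L q l != 0.
  apply/existsP; apply: contraR Hs; rewrite negb_exists => /forallP H.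
  by apply/eqP; apply: big1 => q _; apply/eqP; move: (H q); rewrite negbK.
rewrite mulf_eq0 negb_or in Hq; case/andP: Hq => H1 H2.
have := IH _ _ H1.
have : E q l by apply: contraR H2 => /HL ->.
move/Hf; lia.
Qed.

Lemma inv_struct n (L : 'M[R]_n.+1) (E : rel 'I_n.+1) (f : 'I_n.+1 -> nat) B :
  (forall p q, ~~ E p q -> L p q = 0) -> (forall p q, E p q -> (f p < f q)%N) ->
  (forall x, (f x < B)%N) ->
  [/\ (1%:M - L) \in unitmx,
      (forall r p, (f p < f r)%N -> invmx (1%:M - L) r p = 0) &
      (forall r, invmx (1%:M - L) r r = 1)].
Proof.
move=> HL Hf HB.
have Hz : forall m r p, (f r + m > f p)%N -> (L ^+ m) r p = 0.
  move=> m r p H; apply/eqP; apply: contraLR H => /(pow_support HL Hf); lia.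
have HLB : L ^+ B = 0.
  apply/matrixP => r p; rewrite mxE; apply: Hz; have := HB p; lia.
set S := \sum_(m < B) L ^+ m.
have HNS : (1%:M - L) *m S = 1%:M.
  rewrite idmxE mulmxE -opprB mulNr -subrX1 HLB; by rewrite sub0r opprK.
have [Hu _] := mulmx1_unit HNS.
have HI : invmx (1%:M - L) = S.
  by have := mulmxA (invmx (1%:M - L)) (1%:M - L) S; rewrite HNS mulmx1 mulVmx // mul1mx.
split => //.
- move=> r p Hrp; rewrite HI /S summxE; apply: big1 => m _; apply: Hz; lia.
- move=> r; rewrite HI /S summxE.
  have B0 : (0 < B)%N by have := HB r; lia.
  case: B HB B0 {HLB S HNS HI} => // B HB _.
  rewrite big_ord_recl expr0 -idmxE mxE eqxx big1 ?addr0 // => m _.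
  by apply: Hz; rewrite lift0 /=; lia.
Qed.
Lemma sigmaN n (N : 'M[R]_n) (w : 'rV[R]_n) : N \in unitmx ->
  forall p r, ((invmx N)^T *m diag_mx w *m invmx N *m N) p r = invmx N r p * w 0 r.
Proof. by move=> HN p r; rewrite -mulmxA mulVmx // mulmx1 mul_mx_diag !mxE. Qed.

Lemma pd_zero n (A : 'M[R]_n) (v : 'I_n -> R) : A \in unitmx ->
  (forall p, v p = 0 \/ \sum_q (A^T *m A) p q * v q = 0) -> forall q, v q = 0.
Proof.
move=> HA Hv.
have H0 : \sum_p v p * \sum_q (A^T *m A) p q * v q = 0.
  by apply: big1 => p _; case: (Hv p) => ->; rewrite ?mul0r ?mulr0.
set u := fun r => \sum_p A r p * v p.
have Hsq : \sum_p v p * \sum_q (A^T *m A) p q * v q = \sum_r u r ^+ 2.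
  rewrite /u.
  transitivity (\sum_p \sum_q \sum_r (A r p * v p) * (A r q * v q)).
    apply: eq_bigr => p _; rewrite mulr_sumr; apply: eq_bigr => q _.
    rewrite !mxE mulr_suml mulr_sumr; apply: eq_bigr => r _; rewrite !mxE; ring.
  transitivity (\sum_p \sum_r \sum_q (A r p * v p) * (A r q * v q)).
    by apply: eq_bigr => p _; rewrite exchange_big.
  rewrite exchange_big; apply: eq_bigr => r _.
  rewrite expr2 mulr_suml; apply: eq_bigr => p _; by rewrite mulr_sumr.
have Hu : forall r, u r = 0.
  move=> r; apply/eqP; rewrite -sqrf_eq0; apply/eqP.
  by apply: (psumr_eq0P (P := predT) (F := fun r => u r ^+ 2)) => //;
    [move=> ? _; apply: sqr_ge0 | rewrite -Hsq].
set V : 'cV[R]_n := \col_q v q.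
have HAV : A *m V = 0.
  by apply/matrixP => r k; rewrite !mxE -[RHS](Hu r); apply: eq_bigr => p _; rewrite mxE.
have HV : V = 0 by rewrite -[V]mul1mx -(mulVmx HA) -mulmxA HAV mulmx0.
by move=> q; have := congr1 (fun M : 'cV[R]_n => M q 0) HV; rewrite !mxE.
Qed.

Lemma h_lt n (E : rel 'I_n) p q : is_dag E -> E p q ->
  (#|[pred y | connect E y p]| < #|[pred y | connect E y q]|)%N.
Proof.
move=> Hd Hpq; apply: proper_card; apply/properP; split.
  apply/subsetP => y; rewrite !inE => Hy.
  by apply: connect_trans Hy (connect1 Hpq).
by exists q; rewrite !inE ?connect0 //; apply: Hd.
Qed.

Lemma sum_sub n (A B C : 'M[R]_n) p r :
  \sum_q A p q * (B q r - C q r) = (A *m B) p r - (A *m C) p r.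
Proof. by rewrite !mxE -sumrB; apply: eq_bigr => q _; rewrite mulrBr. Qed.

Lemma sum_sub2 n (A B C : 'M[R]_n) p r s t :
  \sum_q A p q * (B q r - (C q s - C q t) / 2) =
  (A *m B) p r - ((A *m C) p s - (A *m C) p t) / 2.
Proof.
rewrite !mxE -sumrB mulr_suml -sumrB; apply: eq_bigr => q _; ring.
Qed.

Theorem lemma5p7 (n : nat) (E : rel 'I_n) (c : 'I_n -> 'I_n -> nat)
    (i j : 'I_n) :
  is_dag E -> covered E i j ->
  (exists k l : 'I_n, [/\ E k l, c k l = c i j, l != i & l != j]) ->
  ~ (forall S : 'M[R]_n,
       model (rev_edge E i j) (rev_col c i j) S <-> model E c S).
Proof.
case: n E c i j => [|n] E c i j; first by case: i.
move=> Hd [Hij Hcov] [k [l [Hkl Hc Hli Hlj]]] Hiff.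
have Hnl : forall x, ~~ E x x.
  by move=> x; apply/negP => Hx; have := Hd x x Hx; rewrite connect0.
have Hji : ~~ E j i.
  by apply/negP => Hx; have := Hd j i Hx; rewrite connect1.
have Hneq : i != j.
  by apply/eqP => Heq; move: Hij; rewrite Heq (negbTE (Hnl j)).
set h := fun x => #|[pred y | connect E y x]|.
have hlt : forall p q, E p q -> (h p < h q)%N by move=> p q; apply: h_lt.
have hb : forall x, (h x < n.+2)%N.
  by move=> x; have := max_card [pred y | connect E y x]; rewrite card_ord /h.
clearbody h.
set L : 'M[R]_n.+1 := \matrix_(p, q) (if E p q && (c p q == c i j) then 1 else 0).
have HLs : forall p q, ~~ E p q -> L p q = 0 by move=> p q H; rewrite mxE (negbTE H).
have [HNu HNz HNd] := inv_struct HLs hlt hb.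
set Ni := invmx (1%:M - L).
set S := Ni^T *m diag_mx (\row_k (1:R)) *m Ni.
have HmodG : model E c S.
  exists L, (fun _ => 1); split; first by move=> _; exact: ltr01.
  split; first exact: HLs.
  split; last by [].
  by move=> p q p' q' H1 H2 Hcc; rewrite !mxE H1 H2 Hcc.
have [L' [w' [Hw' [HL's [HL'c HS]]]]] := (proj2 (Hiff S)) HmodG.
have E'ji : rev_edge E i j j i by rewrite /rev_edge !eqxx.
have E'l : forall p, rev_edge E i j p l = E p l.
  by move=> p; rewrite /rev_edge (negbTE Hli) (negbTE Hlj) !andbF.
have E'i : forall p, p != j -> rev_edge E i j p i = E p i.
  move=> p Hp; rewrite /rev_edge (negbTE Hp) /=; case: (p == i) => //=; by case: eqP Hneq.
have hij := hlt _ _ Hij.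
have Hnji : j != i by rewrite eq_sym.
set f' := fun x => if x == i then (2 * h i).+1 else if x == j then (2 * h i)%N else (2 * h x)%N.
have Hf' : forall p q, rev_edge E i j p q -> (f' p < f' q)%N.
  move=> p q; rewrite /rev_edge /f'.
  have [->|pj] := eqVneq p j.
    rewrite (negbTE Hnji) /=.
    have [_|qi] := eqVneq q i; first by move=> _; clear; lia.
    have [->|qj] := eqVneq q j; first by rewrite (negbTE (Hnl j)).
    by move/hlt => Hx; clear - Hx hij; lia.
  have [->|pi] := eqVneq p i.
    rewrite /=.
    have [_|qj] := eqVneq q j; first by [].
    have [->|qi] := eqVneq q i; first by rewrite (negbTE (Hnl i)).
    by move/hlt => Hx; clear - Hx hij; lia.
  rewrite /=.
  have [->|qi] := eqVneq q i; first by move/hlt => Hx; clear - Hx hij; lia.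
  have [->|qj] := eqVneq q j.
    by rewrite Hcov (negbTE pi) orbF => /hlt => Hx; clear - Hx hij; lia.
  by move/hlt => Hx; clear - Hx hij; lia.
have hb' : forall x, (f' x < 2 * n.+2 + 2)%N.
  move=> x; rewrite /f'; have := hb x; have := hb i.
  by case: (x == i); case: (x == j); clear; lia.
have [HMu HMz HMd] := inv_struct HL's Hf' hb'.
set M := 1%:M - L'.
set N := 1%:M - L.
have HNi : Ni \in unitmx by rewrite unitmx_inv.
have HS1 : S = Ni^T *m Ni.
  rewrite /S; have -> : \row_k (1:R) = (const_mx 1 : 'rV[R]_n.+1) by apply/matrixP => ? ?; rewrite !mxE.
  by rewrite diag_const_mx mulmx1.
have GN : forall p r, (S *m N) p r = Ni r p.
  by move=> p r; rewrite /S sigmaN // mxE mulr1.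
have GM : forall p r, (S *m M) p r = invmx M r p * w' r.
  by move=> p r; rewrite HS sigmaN // mxE.
have HL'kl : L' k l = 1.
  have Hv := @pd_zero _ Ni (fun q => M q l - N q l) HNi.
  have : M k l - N k l = 0.
    apply: Hv => p.
    case Epl: (E p l).
      right; rewrite -HS1 sum_sub GM GN.
      have hpl := hlt _ _ Epl.
      rewrite HNz // HMz ?mul0r ?subr0 //; apply: Hf'; by rewrite E'l.
    left; rewrite !mxE Epl HL's ?E'l ?Epl //=; ring.
  rewrite !mxE Hkl Hc eqxx /=; lra.
have HNL : (Ni *m L) i j = 1.
  rewrite mxE (bigD1 i) //= big1 ?addr0.
    by rewrite HNd mxE Hij eqxx mul1r.
  move=> q Hq; case Eqj: (E q j).
    have Eqi : E q i by move: Eqj; rewrite Hcov (negbTE Hq) orbF.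
    by rewrite HNz ?mul0r //; apply: hlt.
  by rewrite HLs ?Eqj // mulr0.
have Hnij : Ni i j = 1.
  have E1 : Ni *m N = Ni - Ni *m L by rewrite /N mulmxBr mulmx1.
  have : (Ni - Ni *m L) i j = 0 by rewrite -E1 mulVmx // mxE (negbTE Hneq).
  rewrite mxE [X in _ + X = _]mxE HNL => /eqP; rewrite subr_eq0 => /eqP //.
have Hv := @pd_zero _ Ni (fun q => M q i - (N q i - N q j) / 2) HNi.
have : M j i - (N j i - N j j) / 2 = 0.
  apply: Hv => p.
  case Pc: ((p == j) || E p i).
    right; rewrite -HS1 sum_sub2 GM !GN.
    have HE' : rev_edge E i j p i.
      by case/orP: Pc => [/eqP -> //| Epi]; rewrite E'i //; apply: contraTneq Epi => ->.
    rewrite HMz ?mul0r; last by apply: Hf'.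
    case/orP: Pc => [/eqP ->| Epi].
      by rewrite Hnij HNd subrr mul0r subrr.
    have hpi := hlt _ _ Epi.
    rewrite !HNz ?subrr ?mul0r ?subrr //; clear - hpi hij; lia.
  left; move/negbT: Pc; rewrite negb_or => /andP [pj npi].
  have [->|pi] := eqVneq p i.
    rewrite !mxE eqxx (negbTE (Hnl i)) Hij eqxx (negbTE Hneq) HL's /=.
      by field.
    by rewrite E'i.
  have npj : E p j = false by rewrite Hcov (negbTE pi) (negbTE npi).
  rewrite !mxE (negbTE pi) (negbTE pj) (negbTE npi) npj HL's /=.
    by field.
  by rewrite E'i.
rewrite !mxE (negbTE Hnji) (negbTE Hji) (negbTE (Hnl j)) eqxx /=.
have Hcol : L' j i = L' k l.
  apply: HL'c => //; first by rewrite E'l.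
  by rewrite /rev_col !eqxx /= (negbTE Hli) andbF.
rewrite Hcol HL'kl; lra.
Qed.
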